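(* The price of anarchy (supremum over all weights $w_1,w_2\ge0$ with $w_1+w_2>0$ and all instances, with respect to pure Nash equilibria) for symmetric simultaneous two-player weighted congestion games with affine costs and uniform cost functions is equal to $2$.
   Context: A weighted two-player congestion game with affine costs consists of a finite set $R$ of resources, coefficients $\alpha_r,\beta_r \geq 0$ for each $r\in R$, two players $i=1,2$ with weights $w_i\ge 0$, and for each player $i$ a nonempty finite set $\mathcal{A}_i \subseteq 2^R$ of actions; it is symmetric if $\mathcal{A}_1=\mathcal{A}_2$. For an action profile $A=(A_1,A_2)$ the load of $r$ is $x_r(A)=\sum_{j:\, r\in A_j} w_j$. With uniform costs, player $i$ pays $C_i(A)=\sum_{r\in A_i}(\alpha_r+\beta_r x_r(A))$. The social cost is $C(A)=C_1(A)+C_2(A)$. A pure Nash equilibrium is a profile from which no player can lower her cost by unilaterally changing her action. The price of anarchy of an instance is the maximum over Nash equilibria $A$ of $C(A)/\min_{A'} C(A')$; the price of anarchy of a class is the supremum over all instances (with positive optimal social cost). *)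

(* Defs.v *)
From HB Require Import structures.
From mathcomp Require Import all_boot all_order all_algebra.
From mathcomp Require Import reals.
Set Implicit Arguments. Unset Strict Implicit. Unset Printing Implicit Defensive.
Import Order.TTheory GRing.Theory Num.Theory.
Local Open Scope ring_scope.

Section WCG.
Variables (R : realType) (T : finType).
Variables (alpha beta : T -> R) (w1 w2 : R).

Definition load (A1 A2 : {set T}) (r : T) : R :=
  (if r \in A1 then w1 else 0) + (if r \in A2 then w2 else 0).

Definition cost1 (A1 A2 : {set T}) : R :=
  \sum_(r in A1) (alpha r + beta r * load A1 A2 r).
Definition cost2 (A1 A2 : {set T}) : R :=
  \sum_(r in A2) (alpha r + beta r * load A1 A2 r).
Definition social (A1 A2 : {set T}) : R := cost1 A1 A2 + cost2 A1 A2.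

(* symmetric game: both players have action set Acts *)
Definition is_pure_NE (Acts : {set {set T}}) (A1 A2 : {set T}) : Prop :=
  [/\ A1 \in Acts, A2 \in Acts,
      (forall B, B \in Acts -> cost1 A1 A2 <= cost1 B A2)
    & forall B, B \in Acts -> cost2 A1 A2 <= cost2 A1 B].

Definition is_optimum (Acts : {set {set T}}) (O1 O2 : {set T}) : Prop :=
  [/\ O1 \in Acts, O2 \in Acts
    & forall B1 B2, B1 \in Acts -> B2 \in Acts -> social O1 O2 <= social B1 B2].
End WCG.

Definition valid_instance (R : realType) (T : finType) (alpha beta : T -> R)
    (w1 w2 : R) (Acts : {set {set T}}) : Prop :=
  (forall r, 0 <= alpha r) /\ (forall r, 0 <= beta r) /\
  0 <= w1 /\ 0 <= w2 /\ 0 < w1 + w2 /\ Acts != set0.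

Definition poa_upper_bound (R : realType) (c : R) : Prop :=
  forall (T : finType) (alpha beta : T -> R) (w1 w2 : R) (Acts : {set {set T}})
    (A1 A2 O1 O2 : {set T}),
    valid_instance alpha beta w1 w2 Acts ->
    is_pure_NE alpha beta w1 w2 Acts A1 A2 ->
    is_optimum alpha beta w1 w2 Acts O1 O2 ->
    0 < social alpha beta w1 w2 O1 O2 ->
    social alpha beta w1 w2 A1 A2 / social alpha beta w1 w2 O1 O2 <= c.

(* Main.v *)
Require Import Defs.
From HB Require Import structures.
From mathcomp Require Import all_boot all_order all_algebra.
From mathcomp Require Import reals.
From mathcomp Require Import ring lra.
Import Order.TTheory GRing.Theory Num.Theory.
Local Open Scope ring_scope.

Lemma key (R : realType) (T : finType) (alpha beta : T -> R) (w1 w2 : R)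
  (A1 A2 O1 O2 : {set T}) :
  (forall r, 0 <= alpha r) -> (forall r, 0 <= beta r) -> 0 <= w1 -> 0 <= w2 ->
  0 <= (w1+w2) * (2 * social alpha beta w1 w2 O1 O2 - social alpha beta w1 w2 A1 A2)
   - (w1*(cost1 alpha beta w1 w2 O1 A2 - cost1 alpha beta w1 w2 A1 A2)
     + w2*(cost1 alpha beta w1 w2 O2 A2 - cost1 alpha beta w1 w2 A1 A2)
     + w2*(cost2 alpha beta w1 w2 A1 O2 - cost2 alpha beta w1 w2 A1 A2)
     + w1*(cost2 alpha beta w1 w2 A1 O1 - cost2 alpha beta w1 w2 A1 A2)).
Proof.
move=> ha hb h1 h2.
rewrite /social /cost1 /cost2 !big_mkcond /=.
elim: (index_enum T) => [|x s IH]; first by rewrite !big_nil; lra.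
rewrite !big_cons.
have hax := ha x; have hbx := hb x.
have e1 := mulr_ge0 hax h1; have e2 := mulr_ge0 hax h2.
have f11 := mulr_ge0 (mulr_ge0 hbx h1) h1.
have f12 := mulr_ge0 (mulr_ge0 hbx h1) h2.
have f22 := mulr_ge0 (mulr_ge0 hbx h2) h2.
rewrite /load.
case: (x \in A1); case: (x \in A2); case: (x \in O1); case: (x \in O2);
 rewrite /load in IH; nra.
Qed.

Theorem corollary3 (R : realType) :
  poa_upper_bound (2 : R) /\ (forall c : R, c < 2 -> ~ poa_upper_bound c).
Proof.
split.
  move=> T alpha beta w1 w2 Acts A1 A2 O1 O2 [ha [hb [h1 [h2 [hW _]]]]]
    [iA1 iA2 NE1 NE2] [iO1 iO2 _] hpos.
  rewrite ler_pdivrMr //.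
  have K := @key R T alpha beta w1 w2 A1 A2 O1 O2 ha hb h1 h2.
  have d1 := NE1 _ iO1; have d2 := NE1 _ iO2.
  have d3 := NE2 _ iO2; have d4 := NE2 _ iO1.
  set CA := social _ _ _ _ A1 A2 in K *.
  set CO := social _ _ _ _ O1 O2 in K hpos *.
  have p1 := mulr_ge0 h1 (etrans (subr_ge0 _ _) d1).
  have p2 := mulr_ge0 h2 (etrans (subr_ge0 _ _) d2).
  have p3 := mulr_ge0 h2 (etrans (subr_ge0 _ _) d3).
  have p4 := mulr_ge0 h1 (etrans (subr_ge0 _ _) d4).
  have : 0 <= (w1 + w2) * (2 * CO - CA) by lra.
  rewrite pmulr_rge0 // => HH.
  lra.
move=> c hc H.
pose alpha := fun r : bool => if r then (0:R) else 1.
pose beta := fun r : bool => if r then (1:R) else 0.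
pose Acts := [set [set true]; [set false]].
have hA : forall B, B \in Acts -> B = [set true] \/ B = [set false].
  by move=> B; rewrite !inE => /orP [] /eqP ->; [left|right].
have E : forall (x y : bool), (cost1 alpha beta 0 1 [set x] [set y] = alpha x + beta x * (if x == y then 1 else 0)) /\
    (cost2 alpha beta 0 1 [set x] [set y] = alpha y + beta y).
  move=> x y; rewrite /cost1 /cost2 /load !big_set1 !inE eqxx.
  by case: x; case: y => /=; split; rewrite /alpha /beta /=; lra.
have vi : valid_instance alpha beta 0 1 Acts.
  split; first by case=> /=; rewrite /alpha; lra.
  split; first by case=> /=; rewrite /beta; lra.
  do 3!(split; first lra).
  by apply/set0Pn; exists [set true]; rewrite !inE eqxx.
have NE : is_pure_NE alpha beta 0 1 Acts [set true] [set true].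
  split; try by rewrite !inE eqxx ?orbT.
    move=> B /hA [] ->; rewrite !(proj1 (E _ _)) /alpha /beta /=; lra.
  move=> B /hA [] ->; rewrite !(proj2 (E _ _)) /alpha /beta /=; lra.
have OP : is_optimum alpha beta 0 1 Acts [set true] [set false].
  split; try by rewrite !inE eqxx ?orbT.
  move=> B1 B2 /hA [] -> /hA [] ->; rewrite /social !(proj1 (E _ _)) !(proj2 (E _ _)) /alpha /beta /=; lra.
have := H bool alpha beta 0 1 Acts [set true] [set true] [set true] [set false] vi NE OP.
rewrite /social !(proj1 (E _ _)) !(proj2 (E _ _)) /alpha /beta /=.
rewrite !(mul1r, mul0r, add0r, addr0, divr1) => HH.
have := HH ltr01; lra.
Qed.
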